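(* Let $j>0$ and $R\in(0,1)$. For every $\delta>0$ small enough there is a unique function $\rho:[0,1]\to[0,\infty)$, continuous on $[0,R]$ and vanishing on $(R,1]$, such that $u:=j\delta D_0+\rho$ satisfies $$S^{(\delta,-)}_\delta(u)=u,$$ with cut point $R^{(\delta)}_{G^{\rm neum}_\delta*u}=R$. Moreover, for fixed $\delta$, $\rho$ is (pointwise) an increasing function of $R$.
   Context: $D_0$ is the Dirac delta at $0$. $G^{\rm neum}_t(r,r')$, $r,r'\in[0,1]$, is the Green function of $\partial_t\rho=\frac12\partial_r^2\rho$ on $[0,1]$ with Neumann boundary conditions: $G^{\rm neum}_t(r,r')=\sum_kG_t(r,r'_k)$, $G_t(r,r')=e^{-(r-r')^2/2t}/\sqrt{2\pi t}$, where $r'_k$ ranges over the images of $r'$ under repeated reflections of $[0,1]$ about its endpoints. For $u=cD_0+\rho$ ($c\ge0$, $\rho\in L^\infty([0,1],\mathbb R_+)$), $(G^{\rm neum}_\delta*u)(r)=cG^{\rm neum}_\delta(r,0)+\int_0^1G^{\rm neum}_\delta(r,r')\rho(r')dr'$. For a nonnegative $u$ with total mass $>j\delta$, the cut-and-paste map is $K^{(\delta)}u=j\delta D_0+\mathbf 1_{r\in[0,R^{(\delta)}_u]}u$, where $R^{(\delta)}_u$ is defined by $\int_{R^{(\delta)}_u}^1u(r)dr=j\delta$. Finally $S^{(\delta,-)}_\delta(u)=K^{(\delta)}(G^{\rm neum}_\delta*u)$. *)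

(* Defs.v *)
From Stdlib Require Import Reals.
From Coquelicot Require Import Coquelicot.
Open Scope R_scope.

(* Heat kernel G_t(x) = exp(-x^2/(2t)) / sqrt(2 pi t)  (so G_t(r,r') = heat t (r - r')). *)
Definition heat (t x : R) : R := exp (- (x ^ 2) / (2 * t)) / sqrt (2 * PI * t).

(* Neumann Green function on [0,1]: sum over all images of r' under repeated
   reflections about 0 and 1, i.e. r' + 2k and -r' + 2k, k in Z.
   The Z-sum is written as a nat-series pairing k = n and k = -(n+1). *)
Definition Gneum (t r r' : R) : R :=
  Series (fun n : nat =>
      heat t (r - r' - 2 * INR n) + heat t (r + r' - 2 * INR n)
    + heat t (r - r' + 2 * (INR n + 1)) + heat t (r + r' + 2 * (INR n + 1))).

(* A measure u = c D_0 + rho on [0,1] is represented by the pair (c, rho). *)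
Definition meas : Type := (R * (R -> R))%type.

(* Density of G^neum_t * u (the convolution has no atom). *)
Definition Gneum_conv (t : R) (u : meas) (r : R) : R :=
  fst u * Gneum t r 0 + RInt (fun r' => Gneum t r r' * snd u r') 0 1.

(* Rc is the cut point R^{(delta)}_v of a density v at level m = j delta:
   int_{Rc}^1 v = m (the map is defined only when the total mass exceeds m). *)
Definition is_cut_point (m : R) (v : R -> R) (Rc : R) : Prop :=
  0 <= Rc <= 1 /\ RInt v 0 1 > m /\ RInt v Rc 1 = m.

(* K^{(delta)} v = m D_0 + 1_{[0,Rc]} v, given the cut point Rc of v. *)
Definition cut_paste (m : R) (v : R -> R) (Rc : R) : meas :=
  (m, fun r => if Rle_dec r Rc then v r else 0).

Definition meas_eq (u w : meas) : Prop :=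
  fst u = fst w /\ (forall r, 0 <= r <= 1 -> snd u r = snd w r).

Definition fixed_profile (j delta Rc : R) (rho : R -> R) : Prop :=
  (forall r, 0 <= r <= 1 -> 0 <= rho r) /\
  (forall r, 0 <= r <= Rc ->
     filterlim rho (within (fun y => 0 <= y <= Rc) (locally r)) (locally (rho r))) /\
  (forall r, Rc < r <= 1 -> rho r = 0) /\
  is_cut_point (j * delta) (Gneum_conv delta (j * delta, rho)) Rc /\
  meas_eq (cut_paste (j * delta) (Gneum_conv delta (j * delta, rho)) Rc)
          (j * delta, rho).

(* Main.v *)
Require Import Defs.
From Stdlib Require Import Reals Lra Lia.
From Coquelicot Require Import Coquelicot.
Open Scope R_scope.


Ltac fixR := match goal with |- @eq _ ?a ?b => change (@eq R a b) end.

Lemma exRc (f : R -> R) a b : (forall z, Rmin a b <= z <= Rmax a b -> continuous f z) -> ex_RInt f a b.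
Proof. apply (@ex_RInt_continuous R_CompleteNormedModule). Qed.
Lemma RIc (f : R -> R) a b : ex_RInt f a b -> is_RInt f a b (RInt f a b).
Proof. apply (@RInt_correct R_CompleteNormedModule). Qed.
Lemma exdc (f : R -> R) x : ex_derive f x -> continuous f x.
Proof. apply (@ex_derive_continuous R_AbsRing R_NormedModule). Qed.

Lemma RInt_scalR (f : R -> R) a b c : ex_RInt f a b -> RInt (fun x => c * f x) a b = c * RInt f a b.
Proof. intros H. exact (RInt_scal f a b c H). Qed.

Lemma RInt_comp_linR (f : R -> R) u v a b : ex_RInt f (u * a + v) (u * b + v) ->
  RInt (fun y => u * f (u * y + v)) a b = RInt f (u * a + v) (u * b + v).
Proof. intros H. exact (RInt_comp_lin f u v a b H). Qed.

Definition Eg (y : R) := exp (- (y ^ 2)).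
Definition Jg (z : R) := RInt Eg 0 z.
Definition hg (z s : R) := exp (- (z ^ 2 * (1 + s ^ 2))) / (1 + s ^ 2).
Definition Hg (z : R) := RInt (hg z) 0 1.

Lemma Eg_cont x : continuous Eg x.
Proof. apply exdc. unfold Eg. auto_derive. auto. Qed.

Lemma Eg_exRInt a b : ex_RInt Eg a b.
Proof. apply exRc. intros; apply Eg_cont. Qed.

Lemma Jg_derive z : is_derive Jg z (Eg z).
Proof.
apply (is_derive_RInt Eg Jg 0 z). apply filter_forall. intros b. apply RIc, Eg_exRInt.
apply Eg_cont.
Qed.

Lemma exp_cont_pt x : continuity_pt exp x.
Proof. apply derivable_continuous_pt, derivable_pt_exp. Qed.

Lemma one_sq_pos s : 0 < 1 + s ^ 2.
Proof. generalize (pow2_ge_0 s). lra. Qed.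

Lemma hg_cont z s : continuous (hg z) s.
Proof. apply exdc. unfold hg. auto_derive.
generalize (one_sq_pos s). lra. Qed.

Lemma hg_derive u v : is_derive (fun z => hg z v) u (-2 * u * exp (- (u ^ 2 * (1 + v ^ 2)))).
Proof.
unfold hg. auto_derive. auto.
replace (- (u * (u * 1) * (1 + v * (v * 1)))) with (- (u ^ 2 * (1 + v ^ 2))) by ring.
field. generalize (one_sq_pos v); simpl; lra.
Qed.

Lemma Hg_derive z : is_derive Hg z (-2 * Eg z * Jg z).
Proof.
assert (HD : forall u v, Derive (fun z => hg z v) u = -2 * u * exp (- (u ^ 2 * (1 + v ^ 2)))).
{ intros. apply is_derive_unique, hg_derive. }
assert (H := is_derive_RInt_param hg 0 1 z).
unfold Hg.
replace (-2 * Eg z * Jg z) with (RInt (fun t => Derive (fun u => hg u t) z) 0 1).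
apply H.
- apply filter_forall. intros x t _. eexists. apply hg_derive.
- intros t _. apply (continuity_2d_pt_ext (fun u v => -2 * u * exp (- (u ^ 2 * (1 + v ^ 2))))).
  intros; rewrite HD; auto.
  apply continuity_2d_pt_mult. apply continuity_2d_pt_mult. apply continuity_2d_pt_const.
  apply continuity_2d_pt_id1.
  apply continuity_1d_2d_pt_comp. apply exp_cont_pt.
  apply continuity_2d_pt_opp. apply continuity_2d_pt_mult.
  apply (continuity_2d_pt_ext (fun u v => u * u)). intros; ring.
  apply continuity_2d_pt_mult; apply continuity_2d_pt_id1.
  apply continuity_2d_pt_plus. apply continuity_2d_pt_const.
  apply (continuity_2d_pt_ext (fun u v => v * v)). intros; ring.
  apply continuity_2d_pt_mult; apply continuity_2d_pt_id2.
- apply filter_forall. intros y. apply exRc. intros; apply hg_cont.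
- rewrite (RInt_ext _ (fun t => (-2 * Eg z) * (z * Eg (z * t + 0)))).
  2:{ intros x _. rewrite HD. unfold Eg.
    replace (-2 * exp (- z ^ 2) * (z * exp (- (z * x + 0) ^ 2))) with (-2 * z * (exp (- z ^ 2) * exp (- (z * x + 0) ^ 2))) by ring.
    rewrite <- exp_plus. f_equal. f_equal. ring. }
  rewrite (RInt_scalR (fun t => z * Eg (z * t + 0)) 0 1 (-2 * Eg z)).
  2:{ apply exRc. intros. apply (continuous_mult (fun _ => z) (fun t => Eg (z * t + 0))).
      apply continuous_const. apply (continuous_comp (fun t => z * t + 0) Eg).
      apply exdc. auto_derive; auto. apply Eg_cont. }
  rewrite RInt_comp_linR by apply Eg_exRInt.
  unfold Jg. f_equal. f_equal; ring.
Qed.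

Lemma Hg0 : Hg 0 = PI / 4.
Proof.
unfold Hg. replace (PI / 4) with (atan 1 - atan 0) by (rewrite atan_1, atan_0; ring).
rewrite (RInt_ext _ (fun s => / (1 + s ^ 2))).
2:{ intros x _. unfold hg. replace (- (0 ^ 2 * (1 + x ^ 2))) with 0 by ring. rewrite exp_0. unfold Rdiv. apply Rmult_1_l. }
apply is_RInt_unique.
apply (is_RInt_derive atan (fun s => / (1 + s ^ 2))).
- intros x _. apply is_derive_Reals, derivable_pt_lim_atan.
- intros x _. apply exdc. auto_derive. generalize (one_sq_pos x); lra.
Qed.

Lemma gauss_id z : Jg z ^ 2 + Hg z = PI / 4.
Proof.
set (F := fun z => Jg z ^ 2 + Hg z).
assert (DF : forall x, is_derive F x 0).
{ intros x. unfold F.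
  replace 0 with (2 * Eg x * Jg x + (-2 * Eg x * Jg x)) by ring.
  apply (is_derive_plus (fun z => Jg z ^ 2) Hg).
  - replace (2 * Eg x * Jg x) with (INR 2 * Eg x * Jg x ^ (pred 2)) by (simpl; ring).
    apply (is_derive_pow Jg 2 x (Eg x)). apply Jg_derive.
  - apply Hg_derive. }
destruct (MVT_gen F 0 z (fun _ => 0)) as [c [_ Hc]].
- intros; apply DF.
- intros x _. apply continuity_pt_filterlim. apply exdc.
  eexists; apply DF.
- change (F z = PI / 4). assert (F 0 = PI / 4).
  { unfold F, Jg. rewrite RInt_point. rewrite Hg0. simpl. change zero with 0. ring. }
  lra.
Qed.

Lemma Hg_bounds z : 0 <= Hg z <= exp (- (z ^ 2)) * (PI / 4).
Proof.
assert (E' : forall w a b, ex_RInt (hg w) a b) by (intros; apply exRc; intros; apply hg_cont).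
assert (E := E' z).
split.
- apply RInt_ge_0. lra. apply E. intros x _. unfold hg. apply Rlt_le, Rdiv_lt_0_compat. apply exp_pos. apply one_sq_pos.
- rewrite <- Hg0. unfold Hg.
  rewrite <- (RInt_scalR (hg 0) 0 1 (exp (- (z ^ 2)))) by apply E'.
  apply RInt_le. lra. apply E. apply (ex_RInt_scal (hg 0) 0 1 (exp (- (z ^ 2)))), E'.
  intros x _. unfold hg.
  replace (- (0 ^ 2 * (1 + x ^ 2))) with 0 by ring. rewrite exp_0.
  unfold Rdiv. rewrite Rmult_1_l. apply Rmult_le_compat_r. left; apply Rinv_0_lt_compat, one_sq_pos.
  assert (Hl : - (z ^ 2 * (1 + x ^ 2)) <= - z ^ 2).
  { assert (0 <= z ^ 2 * x ^ 2) by (apply Rmult_le_pos; apply pow2_ge_0). nra. }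
  destruct (Rle_lt_or_eq_dec _ _ Hl) as [h|h].
  + left. apply exp_increasing; auto.
  + right. rewrite h. reflexivity.
Qed.


Lemma cont_eps (f : R -> R) x :
  (forall eps, 0 < eps -> exists d, 0 < d /\ forall y, Rabs (y - x) < d -> Rabs (f y - f x) < eps) ->
  continuous f x.
Proof.
intros H. apply filterlim_locally. intros eps.
destruct (H eps (cond_pos eps)) as [d [Hd Hy]].
exists (mkposreal d Hd). intros y Hb. apply Hy. exact Hb.
Qed.

Lemma eps_cont (f : R -> R) x : continuous f x ->
  forall eps, 0 < eps -> exists d, 0 < d /\ forall y, Rabs (y - x) < d -> Rabs (f y - f x) < eps.
Proof.
intros H eps He. destruct (proj1 (filterlim_locally f (f x)) H (mkposreal eps He)) as [d Hd].
exists d. split. apply cond_pos. intros y Hy. apply (Hd y). exact Hy.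
Qed.

Lemma exp_INR_mult n a : exp (INR n * a) = exp a ^ n.
Proof.
induction n as [|n IH]. simpl. rewrite Rmult_0_l. apply exp_0.
rewrite S_INR. replace ((INR n + 1) * a) with (INR n * a + a) by ring.
rewrite exp_plus, IH. simpl. ring.
Qed.

Lemma sqrt2PId_pos d : 0 < d -> 0 < sqrt (2 * PI * d).
Proof. intros Hd. apply sqrt_lt_R0. generalize PI_RGT_0; intros. nra. Qed.

Lemma heat_pos d x : 0 < d -> 0 < heat d x.
Proof. intros Hd. unfold heat. apply Rdiv_lt_0_compat. apply exp_pos. apply sqrt2PId_pos; auto. Qed.

Lemma heat_even d x : heat d (- x) = heat d x.
Proof. unfold heat. replace ((-x)^2) with (x^2) by ring. reflexivity. Qed.

Lemma heat_mono d x y : 0 < d -> Rabs x <= Rabs y -> heat d y <= heat d x.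
Proof.
intros Hd Hxy. unfold heat. unfold Rdiv. apply Rmult_le_compat_r.
left; apply Rinv_0_lt_compat, sqrt2PId_pos; auto.
destruct (Req_dec (Rabs x) (Rabs y)) as [E|E].
- right. f_equal. rewrite <- (pow2_abs x), <- (pow2_abs y), E. reflexivity.
- left. apply exp_increasing.
  assert (Rabs x < Rabs y) by lra.
  assert (Rabs x ^ 2 < Rabs y ^ 2).
  { assert (0 <= Rabs x) by apply Rabs_pos. nra. }
  rewrite pow2_abs, pow2_abs in H0.
  unfold Rdiv. apply Rmult_lt_compat_r. apply Rinv_0_lt_compat; lra. lra.
Qed.

Definition hC d := exp (/ (2 * d)) / sqrt (2 * PI * d).

Lemma hC_pos d : 0 < d -> 0 < hC d.
Proof. intros. unfold hC. apply Rdiv_lt_0_compat. apply exp_pos. apply sqrt2PId_pos; auto. Qed.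

Lemma heat_bound d x : 0 < d -> heat d x <= hC d * exp (- Rabs x / d).
Proof.
intros Hd. unfold heat, hC.
replace (exp (/ (2 * d)) / sqrt (2 * PI * d) * exp (- Rabs x / d)) with
  (exp (/ (2 * d) + - Rabs x / d) / sqrt (2 * PI * d)) by (rewrite exp_plus; field; apply Rgt_not_eq, sqrt2PId_pos; auto).
unfold Rdiv at 1 3. apply Rmult_le_compat_r.
left; apply Rinv_0_lt_compat, sqrt2PId_pos; auto.
unfold Rdiv.
destruct (Rle_dec (- x ^ 2 * / (2 * d)) (/ (2 * d) + - Rabs x * / d)) as [H|H].
- destruct H as [H|H]. left; apply exp_increasing; auto. right; f_equal; auto.
- exfalso. apply H. rewrite <- (pow2_abs x).
  assert (0 < /d) by (apply Rinv_0_lt_compat; lra).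
  assert (/ (2*d) = /2 * /d) by (field; lra).
  rewrite H1.
  assert (0 <= (Rabs x - 1)^2) by (apply pow2_ge_0).
  nra.
Qed.

Definition Pt d x n := heat d (x - 2 * INR n) + heat d (x + 2 * (INR n + 1)).
Definition Pf d x := Series (Pt d x).
Definition qd d := exp (- 2 / d).
Definition GB d B := 2 * hC d * exp (B / d).

Lemma qd_bounds d : 0 < d -> 0 < qd d < 1.
Proof.
intros Hd. unfold qd. split. apply exp_pos. rewrite <- exp_0. apply exp_increasing.
unfold Rdiv. assert (0 < /d) by (apply Rinv_0_lt_compat; lra). nra.
Qed.

Lemma heat_bound2 d y B n : 0 < d -> 2 * INR n - B <= Rabs y ->
  heat d y <= hC d * exp (B / d) * qd d ^ n.
Proof.
intros Hd H. eapply Rle_trans. apply heat_bound; auto.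
rewrite Rmult_assoc. apply Rmult_le_compat_l. left; apply hC_pos; auto.
unfold qd. rewrite <- exp_INR_mult, <- exp_plus.
assert (0 < /d) by (apply Rinv_0_lt_compat; lra).
destruct (Rle_lt_or_eq_dec (- Rabs y / d) (B / d + INR n * (-2 / d))) as [h|h].
- unfold Rdiv. nra.
- left. apply exp_increasing; auto.
- right. rewrite h; auto.
Qed.

Lemma Pt_bound d x B n : 0 < d -> Rabs x <= B ->
  0 <= Pt d x n <= GB d B * qd d ^ n.
Proof.
intros Hd Hx. unfold Pt, GB. split.
- generalize (heat_pos d (x - 2 * INR n) Hd) (heat_pos d (x + 2 * (INR n + 1)) Hd). lra.
- assert (0 <= INR n) by apply pos_INR.
  assert (h1 : heat d (x - 2 * INR n) <= hC d * exp (B / d) * qd d ^ n).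
  { apply heat_bound2; auto. apply Rabs_le_between' in Hx || idtac.
    destruct (Rcase_abs (x - 2 * INR n)) as [r|r].
    rewrite Rabs_left; auto. generalize (Rabs_le_between _ _ (conj (Rle_refl _) Hx)) || idtac.
    assert (-B <= x <= B) by (apply Rabs_le_between; auto). lra.
    rewrite Rabs_right; auto. assert (-B <= x <= B) by (apply Rabs_le_between; auto). lra. }
  assert (h2 : heat d (x + 2 * (INR n + 1)) <= hC d * exp (B / d) * qd d ^ n).
  { apply heat_bound2; auto.
    destruct (Rcase_abs (x + 2 * (INR n + 1))) as [r|r].
    rewrite Rabs_left; auto. assert (-B <= x <= B) by (apply Rabs_le_between; auto). lra.
    rewrite Rabs_right; auto. assert (-B <= x <= B) by (apply Rabs_le_between; auto). lra. }
  lra.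
Qed.

Lemma Series_nonneg a : (forall n, 0 <= a n) -> ex_series a -> 0 <= Series a.
Proof.
intros H E.
replace 0 with (Series (fun _ : nat => 0)).
apply Series_le; auto. intros n; split; [lra | auto].
rewrite <- (Series_ext (fun n : nat => 0 * 0)) by (intros; ring).
rewrite Series_scal_l. ring.
Qed.

Lemma ex_series_geomC c q : Rabs q < 1 -> ex_series (fun n => c * q ^ n).
Proof.
intros Hq. apply (ex_series_scal_l c (fun n => q ^ n)). eexists. apply is_series_geom; auto.
Qed.

Lemma Series_geomC c q : Rabs q < 1 -> Series (fun n => c * q ^ n) = c / (1 - q).
Proof.
intros Hq. rewrite Series_scal_l. erewrite is_series_unique; [|apply is_series_geom; auto]. field.
assert (q < 1) by (apply Rabs_def2 in Hq; lra). lra.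
Qed.

Lemma Pt_ex d x : 0 < d -> ex_series (Pt d x).
Proof.
intros Hd. apply (ex_series_le (Pt d x) (fun n => GB d (Rabs x) * qd d ^ n)).
- intros n. destruct (Pt_bound d x (Rabs x) n Hd (Rle_refl _)) as [h1 h2].
  change (norm (Pt d x n)) with (Rabs (Pt d x n)). rewrite Rabs_pos_eq; auto.
- apply ex_series_geomC. destruct (qd_bounds d Hd). rewrite Rabs_pos_eq; lra.
Qed.

Lemma Pf_split d x B N : 0 < d -> Rabs x <= B ->
  0 <= Pf d x - sum_f_R0 (Pt d x) N <= GB d B * qd d ^ (S N) / (1 - qd d).
Proof.
intros Hd Hx. destruct (qd_bounds d Hd) as [q0 q1].
assert (Hq : Rabs (qd d) < 1) by (rewrite Rabs_pos_eq; lra).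
unfold Pf. rewrite (Series_incr_n (Pt d x) (S N)); [| lia | apply Pt_ex; auto].
simpl pred.
match goal with |- context [Series ?t] => set (T := t) end.
replace (sum_f_R0 (Pt d x) N + Series T - sum_f_R0 (Pt d x) N) with (Series T) by ring.
assert (ET : ex_series (fun k => GB d B * qd d ^ (S N) * qd d ^ k)) by (apply ex_series_geomC; auto).
split.
- apply Series_nonneg. intros k. apply (Pt_bound d x B); auto.
  apply (ex_series_le T (fun k => GB d B * qd d ^ (S N) * qd d ^ k)); auto.
  intros k. change (norm (T k)) with (Rabs (T k)). unfold T.
  destruct (Pt_bound d x B (S N + k) Hd Hx). rewrite Rabs_pos_eq; auto.
  rewrite pow_add in H0. lra.
- rewrite <- Series_geomC by auto. apply Series_le; auto.
  intros k. unfold T. destruct (Pt_bound d x B (S N + k) Hd Hx). rewrite pow_add in H0. lra.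
Qed.

Lemma heat_cont d x : 0 < d -> continuous (heat d) x.
Proof.
intros Hd. apply (@ex_derive_continuous R_AbsRing R_NormedModule). unfold heat. auto_derive.
auto.
Qed.

Lemma sum_cont (F : nat -> R -> R) N x : (forall n, continuous (F n) x) ->
  continuous (fun y => sum_f_R0 (fun n => F n y) N) x.
Proof.
intros H. induction N as [|N IH]; simpl. apply H.
apply (continuous_plus (fun y => sum_f_R0 (fun n => F n y) N) (F (S N))); auto.
Qed.

Lemma Pt_cont d n x : 0 < d -> continuous (fun y => Pt d y n) x.
Proof.
intros Hd. unfold Pt.
apply (continuous_plus (fun y => heat d (y - 2 * INR n)) (fun y => heat d (y + 2 * (INR n + 1)))).
- apply (continuous_comp (fun y => y - 2 * INR n) (heat d)). apply (@ex_derive_continuous R_AbsRing R_NormedModule); auto_derive; auto.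
  apply heat_cont; auto.
- apply (continuous_comp (fun y => y + 2 * (INR n + 1)) (heat d)). apply (@ex_derive_continuous R_AbsRing R_NormedModule); auto_derive; auto.
  apply heat_cont; auto.
Qed.

Lemma small_pow q c : 0 <= q < 1 -> 0 < c -> exists N, q ^ N < c.
Proof.
intros Hq Hc. destruct (pow_lt_1_zero q) with c as [N HN]; auto.
rewrite Rabs_pos_eq; lra. exists N. specialize (HN N (le_n _)).
rewrite Rabs_pos_eq in HN; auto. apply pow_le; lra.
Qed.

Lemma Pf_cont d x0 : 0 < d -> continuous (Pf d) x0.
Proof.
intros Hd. apply cont_eps. intros eps He.
set (B := Rabs x0 + 1).
destruct (qd_bounds d Hd) as [q0 q1].
assert (HG : 0 < GB d B).
{ unfold GB. generalize (hC_pos d Hd) (exp_pos (B/d)). nra. }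
destruct (small_pow (qd d) (eps / 3 * (1 - qd d) / GB d B)) as [N HN].
lra. apply Rdiv_lt_0_compat; auto. apply Rmult_lt_0_compat; lra.
assert (Ht : GB d B * qd d ^ N / (1 - qd d) < eps / 3).
{ apply (Rmult_lt_compat_l (GB d B)) in HN; auto.
  replace (GB d B * (eps / 3 * (1 - qd d) / GB d B)) with (eps/3 * (1 - qd d)) in HN by (field; lra).
  apply (Rmult_lt_reg_r (1 - qd d)). lra. unfold Rdiv. rewrite Rmult_assoc, Rinv_l by lra. lra. }
assert (Ht' : GB d B * qd d ^ (S N) / (1 - qd d) < eps / 3).
{ eapply Rle_lt_trans; [|exact Ht]. unfold Rdiv. apply Rmult_le_compat_r.
  left; apply Rinv_0_lt_compat; lra. apply Rmult_le_compat_l; [lra|].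
  simpl. assert (0 <= qd d ^ N) by (apply pow_le; lra). nra. }
destruct (eps_cont _ x0 (sum_cont (fun n y => Pt d y n) N x0 (fun n => Pt_cont d n x0 Hd)) (eps/3)) as [d1 [Hd1 H1]].
lra.
exists (Rmin 1 d1). split. apply Rmin_pos; lra.
intros y Hy.
assert (Hy1 : Rabs (y - x0) < 1) by (eapply Rlt_le_trans; [exact Hy| apply Rmin_l]).
assert (Hy2 : Rabs (y - x0) < d1) by (eapply Rlt_le_trans; [exact Hy| apply Rmin_r]).
assert (Hby : Rabs y <= B).
{ unfold B. replace y with ((y - x0) + x0) by ring. eapply Rle_trans. apply Rabs_triang. lra. }
assert (Hbx : Rabs x0 <= B) by (unfold B; lra).
destruct (Pf_split d y B N Hd Hby). destruct (Pf_split d x0 B N Hd Hbx).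
specialize (H1 y Hy2). change (fun n => Pt d y n) with (Pt d y) in H1. change (fun n => Pt d x0 n) with (Pt d x0) in H1.
apply Rabs_def1; apply Rabs_def2 in H1; lra.
Qed.

Lemma Pf_ge_heat d x : 0 < d -> heat d x <= Pf d x.
Proof.
intros Hd. destruct (Pf_split d x (Rabs x) 0 Hd (Rle_refl _)) as [h _].
simpl in h. unfold Pt in h. replace (x - 2 * INR 0) with x in h by (simpl; ring).
generalize (heat_pos d (x + 2 * (INR 0 + 1)) Hd). lra.
Qed.

Lemma ex_series_cmp (a b : nat -> R) : (forall n, 0 <= a n <= b n) -> ex_series b -> ex_series a.
Proof.
intros H Eb. apply (ex_series_le a b); auto. intros n. change (norm (a n)) with (Rabs (a n)).
destruct (H n). rewrite Rabs_pos_eq; auto.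
Qed.

Lemma Pf_even d x : 0 < d -> Pf d (- x) = Pf d x.
Proof.
intros Hd.
set (a := fun n => heat d (x - 2 * INR n)).
set (b := fun n => heat d (x + 2 * (INR n + 1))).
set (b' := fun n => heat d (x + 2 * INR n)).
assert (Ea : ex_series a).
{ apply (ex_series_cmp a (Pt d x)); [|apply Pt_ex; auto]. intros n; unfold a, Pt.
  generalize (heat_pos d (x - 2 * INR n) Hd) (heat_pos d (x + 2 * (INR n + 1)) Hd). lra. }
assert (Eb : ex_series b).
{ apply (ex_series_cmp b (Pt d x)); [|apply Pt_ex; auto]. intros n; unfold b, Pt.
  generalize (heat_pos d (x - 2 * INR n) Hd) (heat_pos d (x + 2 * (INR n + 1)) Hd). lra. }
assert (Hb' : forall k, b' (S k) = b k).
{ intros k. unfold b', b. rewrite S_INR. reflexivity. }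
assert (Eb' : ex_series b').
{ apply ex_series_incr_1. apply (ex_series_ext b); auto. }
assert (EaS : ex_series (fun k => a (S k))) by (apply (ex_series_incr_1 a); auto).
unfold Pf.
rewrite (Series_ext (Pt d (-x)) (fun n => b' n + a (S n))).
2:{ intros n. unfold Pt, a, b'. rewrite <- (heat_even d (- x - 2 * INR n)), <- (heat_even d (- x + 2 * (INR n + 1))).
    rewrite S_INR. f_equal; f_equal; ring. }
rewrite (Series_ext (Pt d x) (fun n => a n + b n)) by (intros; reflexivity).
rewrite Series_plus, Series_plus; auto.
rewrite (Series_incr_1 b'), (Series_incr_1 a); auto.
rewrite (Series_ext (fun k => b' (S k)) b) by auto.
replace (b' 0%nat) with (a 0%nat) by (unfold a, b'; simpl; f_equal; ring).
ring.
Qed.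

Lemma Gneum_P d r r' : 0 < d -> Gneum d r r' = Pf d (r - r') + Pf d (r + r').
Proof.
intros Hd. unfold Gneum, Pf.
rewrite <- Series_plus by (apply Pt_ex; auto).
apply Series_ext. intros n. unfold Pt.
replace (r - r' - 2 * INR n) with (r - r' - 2 * INR n) by ring.
replace (r - r' + 2 * (INR n + 1)) with (r - r' + 2 * (INR n + 1)) by ring.
ring.
Qed.

Lemma RInt_extR (f g : R -> R) a b : (forall x, Rmin a b < x < Rmax a b -> f x = g x) ->
  RInt f a b = RInt g a b.
Proof. intros H. apply RInt_ext. exact H. Qed.

Lemma ex_RInt_scalR (f : R -> R) a b c : ex_RInt f a b -> ex_RInt (fun x => c * f x) a b.
Proof. intros H. exact (ex_RInt_scal f a b c H). Qed.

Lemma RInt_ChaslesR (f : R -> R) a b c : ex_RInt f a b -> ex_RInt f b c ->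
  RInt f a b + RInt f b c = RInt f a c.
Proof. intros H1 H2. exact (RInt_Chasles f a b c H1 H2). Qed.

Lemma heat_exRInt d a b : 0 < d -> ex_RInt (heat d) a b.
Proof. intros Hd. apply exRc. intros; apply heat_cont; auto. Qed.

Lemma heat_int d l u : 0 < d ->
  RInt (heat d) l u = (Jg (u / sqrt (2 * d)) - Jg (l / sqrt (2 * d))) / sqrt PI.
Proof.
intros Hd. set (s := sqrt (2 * d)).
assert (Hs : 0 < s) by (apply sqrt_lt_R0; lra).
assert (Hs2 : s * s = 2 * d) by (apply sqrt_sqrt; lra).
assert (HP : 0 < sqrt PI) by (apply sqrt_lt_R0, PI_RGT_0).
assert (Hss : sqrt (2 * PI * d) = s * sqrt PI).
{ unfold s. rewrite <- sqrt_mult. f_equal; ring. lra. generalize PI_RGT_0; lra. }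
rewrite (RInt_extR _ (fun x => / (s * sqrt PI) * (s * (/ s * Eg (/ s * x + 0))))).
2:{ intros x _. unfold heat, Eg. rewrite Hss. field_simplify_eq; [|split; lra].
    f_equal. rewrite <- Hs2. field. lra. }
rewrite RInt_scalR. rewrite RInt_scalR. rewrite RInt_comp_linR by apply Eg_exRInt.
assert (C : RInt Eg (/ s * l + 0) (/ s * u + 0) = Jg (u / s) - Jg (l / s)).
{ unfold Jg. rewrite <- (RInt_ChaslesR Eg 0 (l / s) (u / s)) by apply Eg_exRInt.
  replace (/ s * l + 0) with (l / s) by (unfold Rdiv; ring). replace (/ s * u + 0) with (u / s) by (unfold Rdiv; ring). lra. }
rewrite C. fixR. field. split; lra.
apply (ex_RInt_scalR (fun x => Eg (/ s * x + 0)) l u (/ s)).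
apply exRc. intros. apply (continuous_comp (fun x => / s * x + 0) Eg). apply exdc. auto_derive; auto. apply Eg_cont.
apply (ex_RInt_scalR _ l u s).
apply (ex_RInt_scalR (fun x => Eg (/ s * x + 0)) l u (/ s)).
apply exRc. intros. apply (continuous_comp (fun x => / s * x + 0) Eg). apply exdc. auto_derive; auto. apply Eg_cont.
Qed.

Lemma Jg_odd w : Jg (- w) = - Jg w.
Proof.
unfold Jg. replace (RInt Eg 0 (- w)) with (RInt Eg (-1 * 0 + 0) (-1 * w + 0)) by (f_equal; ring).
rewrite <- (RInt_comp_linR Eg (-1) 0 0 w).
2:{ apply Eg_exRInt. }
rewrite (RInt_extR _ (fun y => -1 * Eg y)).
rewrite RInt_scalR by apply Eg_exRInt. fixR. ring.
intros x _. unfold Eg. f_equal. f_equal. f_equal. ring.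
Qed.

Lemma Jg_bounds w : 0 <= w -> 0 <= Jg w <= sqrt PI / 2 /\ 1 - exp (- (w ^ 2)) <= 2 * Jg w / sqrt PI.
Proof.
intros Hw.
assert (HP : 0 < sqrt PI) by (apply sqrt_lt_R0, PI_RGT_0).
assert (HP2 : sqrt PI * sqrt PI = PI) by (apply sqrt_sqrt; generalize PI_RGT_0; lra).
assert (J0 : 0 <= Jg w).
{ unfold Jg. apply RInt_ge_0; auto. apply Eg_exRInt. intros; unfold Eg; left; apply exp_pos. }
generalize (gauss_id w) (Hg_bounds w). intros Gi [Hb1 Hb2].
assert (Ee : 0 < exp (- w ^ 2)) by apply exp_pos.
split. split; auto. nra.
apply (Rmult_le_reg_r (sqrt PI)); auto. unfold Rdiv. rewrite Rmult_assoc, Rinv_l by lra. rewrite Rmult_1_r.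
assert (JU : Jg w <= sqrt PI / 2) by nra.
nra.
Qed.

Lemma heat_int_split d l u : 0 < d -> l <= 0 -> 0 <= u ->
  RInt (heat d) l u = (Jg (u / sqrt (2 * d)) + Jg (- l / sqrt (2 * d))) / sqrt PI.
Proof.
intros Hd Hl Hu. rewrite heat_int by auto.
replace (- l / sqrt (2 * d)) with (- (l / sqrt (2 * d))) by (unfold Rdiv; ring).
rewrite Jg_odd. fixR. unfold Rdiv. ring.
Qed.

Lemma heat_int_le1 d l u : 0 < d -> l <= 0 -> 0 <= u -> RInt (heat d) l u <= 1.
Proof.
intros Hd Hl Hu. rewrite heat_int_split by auto.
assert (Hs : 0 < sqrt (2 * d)) by (apply sqrt_lt_R0; lra).
assert (HP : 0 < sqrt PI) by (apply sqrt_lt_R0, PI_RGT_0).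
destruct (Jg_bounds (u / sqrt (2 * d))) as [[a1 a2] _]. apply Rdiv_le_0_compat; lra.
destruct (Jg_bounds (- l / sqrt (2 * d))) as [[b1 b2] _]. apply Rdiv_le_0_compat; lra.
apply (Rmult_le_reg_r (sqrt PI)); auto. unfold Rdiv. rewrite Rmult_assoc, Rinv_l by lra. lra.
Qed.

Lemma exp_neg_sq_small t : 1 <= t -> exp (- (t ^ 2)) < / t.
Proof.
intros Ht. apply (Rmult_lt_reg_r (exp (t ^ 2))). apply exp_pos.
rewrite <- exp_plus. replace (- t ^ 2 + t ^ 2) with 0 by ring. rewrite exp_0.
assert (1 + t ^ 2 < exp (t ^ 2)) by (apply exp_ineq1; nra).
apply (Rmult_lt_reg_l t). lra. rewrite <- Rmult_assoc, Rinv_r by lra. nra.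
Qed.

Lemma heat_int_lower d eps : 0 < d -> 0 < eps -> exists A, 0 < A /\
  forall l u, l <= - A -> A <= u -> 1 - eps < RInt (heat d) l u.
Proof.
intros Hd He.
set (s := sqrt (2 * d)). assert (Hs : 0 < s) by (apply sqrt_lt_R0; lra).
assert (HP : 0 < sqrt PI) by (apply sqrt_lt_R0, PI_RGT_0).
set (t := 1 + / eps). assert (Ht : 1 < t) by (unfold t; generalize (Rinv_0_lt_compat eps He); lra).
exists (s * t). split. nra.
intros l u Hl Hu.
rewrite heat_int_split by (auto; nra).
assert (Hmono : forall w, t <= w -> exp (- (w ^ 2)) < eps).
{ intros w Hw. apply Rle_lt_trans with (exp (- (t ^ 2))).
  - destruct (Req_dec w t) as [->|Hne]. lra. left. apply exp_increasing. nra.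
  - apply Rlt_le_trans with (/ t). apply exp_neg_sq_small; lra.
    unfold t. replace eps with (/ (/ eps)) at 2 by (field; lra).
    apply Rinv_le_contravar. apply Rinv_0_lt_compat; lra. lra. }
assert (Hu' : t <= u / s) by (apply (Rmult_le_reg_r s); auto; unfold Rdiv; rewrite Rmult_assoc, Rinv_l by lra; lra).
assert (Hl' : t <= - l / s) by (apply (Rmult_le_reg_r s); auto; unfold Rdiv; rewrite Rmult_assoc, Rinv_l by lra; lra).
destruct (Jg_bounds (u / s)) as [_ a3]. lra.
destruct (Jg_bounds (- l / s)) as [_ b3]. lra.
generalize (Hmono _ Hu') (Hmono _ Hl'). intros e1 e2.
fold s.
replace ((Jg (u / s) + Jg (- l / s)) / sqrt PI) with ((2 * Jg (u / s) / sqrt PI + 2 * Jg (- l / s) / sqrt PI) / 2) by (field; lra).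
lra.
Qed.

Lemma pow_decr q n m : 0 <= q <= 1 -> (n <= m)%nat -> q ^ m <= q ^ n.
Proof.
intros Hq Hnm. induction Hnm. lra. simpl. assert (0 <= q ^ m) by (apply pow_le; lra). nra.
Qed.

Lemma tail_small d B eps : 0 < d -> 0 < eps -> exists N0, forall N, (N0 <= N)%nat ->
  GB d B * qd d ^ (S N) / (1 - qd d) < eps.
Proof.
intros Hd He. destruct (qd_bounds d Hd) as [q0 q1].
assert (HG : 0 <= GB d B).
{ unfold GB. generalize (hC_pos d Hd) (exp_pos (B/d)). nra. }
destruct (small_pow (qd d) (eps * (1 - qd d) / (GB d B + 1))) as [N HN].
lra. apply Rdiv_lt_0_compat; [apply Rmult_lt_0_compat|]; lra.
exists N. intros M HM.
assert (qd d ^ S M <= qd d ^ N) by (apply pow_decr; [lra|lia]).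
assert (0 <= qd d ^ S M) by (apply pow_le; lra).
apply (Rmult_lt_reg_r (1 - qd d)). lra. unfold Rdiv. rewrite Rmult_assoc, Rinv_l by lra. rewrite Rmult_1_r.
apply Rle_lt_trans with ((GB d B + 1) * qd d ^ N). nra.
apply (Rmult_lt_compat_l (GB d B + 1)) in HN. 2: lra.
replace ((GB d B + 1) * (eps * (1 - qd d) / (GB d B + 1))) with (eps * (1 - qd d)) in HN by (field; lra).
lra.
Qed.

Lemma Pf_exRInt d a b : 0 < d -> ex_RInt (Pf d) a b.
Proof. intros Hd. apply exRc. intros; apply Pf_cont; auto. Qed.

Lemma heat_shift d a b c : 0 < d -> RInt (fun x => heat d (x + c)) a b = RInt (heat d) (a + c) (b + c).
Proof.
intros Hd. replace (a + c) with (1 * a + c) by ring. replace (b + c) with (1 * b + c) by ring.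
rewrite <- RInt_comp_linR by (apply heat_exRInt; auto).
apply RInt_extR. intros. fixR. rewrite Rmult_1_l. f_equal. ring.
Qed.

Lemma Pt_exRInt d n a b : 0 < d -> ex_RInt (fun x => Pt d x n) a b.
Proof. intros Hd. apply exRc. intros; apply Pt_cont; auto. Qed.

Lemma sumPt_exRInt d N a b : 0 < d -> ex_RInt (fun x => sum_f_R0 (Pt d x) N) a b.
Proof. intros Hd. apply exRc. intros. apply (sum_cont (fun n y => Pt d y n)). intros; apply Pt_cont; auto. Qed.

Lemma sumPt_int d N a : 0 < d ->
  RInt (fun x => sum_f_R0 (Pt d x) N) a (a + 2) = RInt (heat d) (a - 2 * INR N) (a + 2 * INR N + 4).
Proof.
intros Hd.
assert (Hp : forall n, RInt (fun x => Pt d x n) a (a + 2) =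
   RInt (heat d) (a - 2 * INR n) (a - 2 * INR n + 2) + RInt (heat d) (a + 2 * INR n + 2) (a + 2 * INR n + 4)).
{ intros n. unfold Pt.
  rewrite (RInt_extR _ (fun x => heat d (x + - (2 * INR n)) + heat d (x + 2 * (INR n + 1)))) by (intros; fixR; f_equal).
  assert (RInt (fun x => heat d (x + - (2 * INR n)) + heat d (x + 2 * (INR n + 1))) a (a + 2) =
    RInt (fun x => heat d (x + - (2 * INR n))) a (a + 2) + RInt (fun x => heat d (x + 2 * (INR n + 1))) a (a + 2)).
  { apply (RInt_plus (fun x => heat d (x + - (2 * INR n))) (fun x => heat d (x + 2 * (INR n + 1)))).
    apply exRc; intros; apply (continuous_comp (fun x => x + - (2 * INR n)) (heat d)); [apply exdc; auto_derive; auto| apply heat_cont; auto].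
    apply exRc; intros; apply (continuous_comp (fun x => x + 2 * (INR n + 1)) (heat d)); [apply exdc; auto_derive; auto| apply heat_cont; auto]. }
  rewrite H. rewrite !heat_shift by auto. fixR. f_equal; f_equal; ring. }
induction N as [|N IH].
- simpl sum_f_R0. rewrite Hp. simpl INR.
  replace (a - 2 * 0 + 2) with (a + 2 * 0 + 2) by ring.
  rewrite (RInt_ChaslesR (heat d)) by (apply heat_exRInt; auto). fixR. f_equal; ring.
- simpl sum_f_R0.
  assert (RInt (fun x => sum_f_R0 (Pt d x) N + Pt d x (S N)) a (a + 2) =
     RInt (fun x => sum_f_R0 (Pt d x) N) a (a + 2) + RInt (fun x => Pt d x (S N)) a (a + 2)).
  { apply (RInt_plus (fun x => sum_f_R0 (Pt d x) N) (fun x => Pt d x (S N))).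
    apply sumPt_exRInt; auto. apply Pt_exRInt; auto. }
  rewrite H, IH, Hp. rewrite S_INR.
  replace (a - 2 * (INR N + 1) + 2) with (a - 2 * INR N) by ring.
  replace (a + 2 * (INR N + 1) + 2) with (a + 2 * INR N + 4) by ring.
  replace (a + 2 * (INR N + 1) + 4) with (a + 2 * INR N + 4 + 2) by ring.
  assert (E := heat_exRInt d). fixR.
  rewrite <- (RInt_ChaslesR (heat d) (a - 2 * (INR N + 1)) (a - 2 * INR N) (a + 2 * INR N + 4 + 2)) by auto.
  rewrite <- (RInt_ChaslesR (heat d) (a - 2 * INR N) (a + 2 * INR N + 4) (a + 2 * INR N + 4 + 2)) by auto.
  ring.
Qed.

Lemma approx_eq x y : (forall eps, 0 < eps -> Rabs (x - y) < eps) -> x = y.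
Proof.
intros H. destruct (Req_dec x y) as [e|ne]; auto.
assert (0 < Rabs (x - y)) by (apply Rabs_pos_lt; lra).
specialize (H _ H0). lra.
Qed.

Lemma RInt_constR a b c : RInt (fun _ => c) a b = (b - a) * c.
Proof. exact (RInt_const a b c). Qed.

Lemma RInt_minusR (f g : R -> R) a b : ex_RInt f a b -> ex_RInt g a b ->
  RInt (fun x => f x - g x) a b = RInt f a b - RInt g a b.
Proof. intros H1 H2. exact (RInt_minus f g a b H1 H2). Qed.

Lemma RInt_plusR (f g : R -> R) a b : ex_RInt f a b -> ex_RInt g a b ->
  RInt (fun x => f x + g x) a b = RInt f a b + RInt g a b.
Proof. intros H1 H2. exact (RInt_plus f g a b H1 H2). Qed.

Lemma ex_RInt_minusR (f g : R -> R) a b : ex_RInt f a b -> ex_RInt g a b ->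
  ex_RInt (fun x => f x - g x) a b.
Proof. intros H1 H2. exact (ex_RInt_minus f g a b H1 H2). Qed.

Lemma ex_RInt_plusR (f g : R -> R) a b : ex_RInt f a b -> ex_RInt g a b ->
  ex_RInt (fun x => f x + g x) a b.
Proof. intros H1 H2. exact (ex_RInt_plus f g a b H1 H2). Qed.

Lemma Pf_period d a : 0 < d -> RInt (Pf d) a (a + 2) = 1.
Proof.
intros Hd. fixR. apply approx_eq. intros eps He.
set (B := Rabs a + 2).
destruct (heat_int_lower d (eps / 2) Hd) as [A [HA HAl]]. lra.
destruct (tail_small d B (eps / 4) Hd) as [N0 HN0]. lra.
destruct (INR_unbounded (A + Rabs a)) as [N1 HN1].
set (N := Nat.max N0 N1).
assert (HNN1 : INR N1 <= INR N) by (apply le_INR; unfold N; lia).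
specialize (HN0 N ltac:(unfold N; lia)).
set (T := GB d B * qd d ^ S N / (1 - qd d)) in *.
assert (Hab : forall x, a <= x <= a + 2 -> Rabs x <= B).
{ intros x Hx. unfold B. apply Rabs_le. generalize (Rabs_le_between' a a 0) (Rle_abs a) (Rle_abs (-a)). rewrite Rabs_Ropp. intros. lra. }
assert (ES := sumPt_exRInt d N a (a + 2) Hd).
assert (EP := Pf_exRInt d a (a + 2) Hd).
assert (HD : 0 <= RInt (Pf d) a (a + 2) - RInt (fun x => sum_f_R0 (Pt d x) N) a (a + 2) <= 2 * T).
{ rewrite <- RInt_minusR by auto. split.
  - apply RInt_ge_0. lra. apply ex_RInt_minusR; auto.
    intros x Hx. destruct (Pf_split d x B N Hd) as [h _]. apply Hab; lra. exact h.
  - replace (2 * T) with (RInt (fun _ => T) a (a + 2)) by (rewrite RInt_constR; fixR; ring).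
    apply RInt_le. lra. apply ex_RInt_minusR; auto. apply exRc; intros; apply continuous_const.
    intros x Hx. destruct (Pf_split d x B N Hd) as [_ h]. apply Hab; lra. exact h. }
rewrite sumPt_int in HD by auto.
assert (HN2 : 0 <= INR N) by apply pos_INR.
assert (Ha := Rle_abs a). assert (Ha' := Rle_abs (- a)). rewrite Rabs_Ropp in Ha'.
assert (L1 : RInt (heat d) (a - 2 * INR N) (a + 2 * INR N + 4) <= 1) by (apply heat_int_le1; auto; lra).
assert (L2 : 1 - eps / 2 < RInt (heat d) (a - 2 * INR N) (a + 2 * INR N + 4)) by (apply HAl; lra).
apply Rabs_def1; lra.
Qed.

Lemma RInt_pointR (f : R -> R) a : RInt f a a = 0.
Proof. exact (RInt_point a f). Qed.

Lemma RInt_swapR (f : R -> R) a b : ex_RInt f a b -> RInt f b a = - RInt f a b.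
Proof. intros H. rewrite <- (opp_RInt_swap f a b H). reflexivity. Qed.

Lemma RInt_abs_bound (f : R -> R) a b M : ex_RInt f a b ->
  (forall t, Rmin a b <= t <= Rmax a b -> Rabs (f t) <= M) -> Rabs (RInt f a b) <= Rabs (b - a) * M.
Proof.
intros E H. destruct (Rle_dec a b) as [h|h].
- rewrite (Rabs_pos_eq (b - a)) by lra. apply abs_RInt_le_const; auto.
  intros t Ht. apply H. rewrite Rmin_left, Rmax_right; auto.
- rewrite (RInt_swapR f b a).
  rewrite Rabs_Ropp, (Rabs_left1 (b - a)) by lra. replace (- (b - a)) with (a - b) by ring.
  apply abs_RInt_le_const. lra. apply ex_RInt_swap; auto.
  intros t Ht. apply H. rewrite Rmin_right, Rmax_left; lra.
  apply ex_RInt_swap; auto.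
Qed.

Lemma cont2_snd (f : R -> R -> R) x t : continuity_2d_pt f x t -> continuous (f x) t.
Proof.
intros H. apply cont_eps. intros eps He. destruct (H (mkposreal eps He)) as [dl Hd].
exists dl. split. apply cond_pos. intros y Hy. apply Hd; auto. rewrite Rminus_eq_0, Rabs_R0. apply cond_pos.
Qed.

Lemma cont2_fst (f : R -> R -> R) x t : continuity_2d_pt f x t -> continuous (fun u => f u t) x.
Proof.
intros H. apply cont_eps. intros eps He. destruct (H (mkposreal eps He)) as [dl Hd].
exists dl. split. apply cond_pos. intros y Hy. apply Hd; auto. rewrite Rminus_eq_0, Rabs_R0. apply cond_pos.
Qed.

Lemma param_cont (f : R -> R -> R) a b x0 : (forall x t, continuity_2d_pt f x t) ->
  continuous (fun x => RInt (fun t => f x t) a b) x0.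
Proof.
intros Hf. apply cont_eps. intros eps He.
set (lo := Rmin a b). set (hi := Rmax a b).
assert (Hlh : lo <= hi) by (unfold lo, hi; apply Rmin_Rmax).
assert (Hba : Rabs (b - a) = hi - lo).
{ unfold lo, hi. destruct (Rle_dec a b). rewrite Rmin_left, Rmax_right, Rabs_pos_eq; lra.
  rewrite Rmin_right, Rmax_left, Rabs_left; lra. }
destruct (uniform_continuity_2d f (x0 - 1) (x0 + 1) lo hi (fun x y _ _ => Hf x y) (mkposreal (eps / (hi - lo + 1)) ltac:(apply Rdiv_lt_0_compat; lra))) as [dl Hdl].
exists (Rmin 1 dl). split. apply Rmin_pos. lra. apply cond_pos.
intros y Hy.
assert (Hy1 : Rabs (y - x0) < 1) by (eapply Rlt_le_trans; [exact Hy|apply Rmin_l]).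
assert (Hy2 : Rabs (y - x0) < dl) by (eapply Rlt_le_trans; [exact Hy|apply Rmin_r]).
assert (E : forall x, ex_RInt (fun t => f x t) a b) by (intros; apply exRc; intros; apply cont2_snd; auto).
rewrite <- RInt_minusR by auto.
eapply Rle_lt_trans. apply (RInt_abs_bound _ a b (eps / (hi - lo + 1))).
apply ex_RInt_minusR; auto.
intros t Ht. left. apply (Hdl x0 t y t); try (apply Rabs_le_between'; lra) || idtac.
all: try (split; apply Rabs_def2 in Hy1; lra).
all: try (fold lo hi in Ht; lra).
rewrite Rminus_eq_0, Rabs_R0. apply cond_pos.
rewrite Hba. apply (Rmult_lt_reg_r (hi - lo + 1)). lra.
replace ((hi - lo) * (eps / (hi - lo + 1)) * (hi - lo + 1)) with ((hi - lo) * eps) by (field; lra). nra.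
Qed.

Lemma cont2_swap (f : R -> R -> R) x t : continuity_2d_pt f x t -> continuity_2d_pt (fun u v => f v u) t x.
Proof.
intros H eps. destruct (H eps) as [dl Hd]. exists dl. intros u v Hu Hv. apply Hd; auto.
Qed.

Lemma fubini (f : R -> R -> R) a b c d : (forall x t, continuity_2d_pt f x t) ->
  RInt (fun x => RInt (fun t => f x t) c d) a b = RInt (fun t => RInt (fun x => f x t) a b) c d.
Proof.
intros Hf.
pose (phi := (fun y t => RInt (fun x => f x t) a y) : R -> R -> R).
pose (psi := (fun x => RInt (fun t => f x t) c d) : R -> R).
pose (F := (fun y => RInt (fun t => phi y t) c d) : R -> R).
pose (H := (fun y => RInt psi a y) : R -> R).
assert (Ef : forall t u v, ex_RInt (fun x => f x t) u v) by (intros; apply exRc; intros; apply cont2_fst; auto).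
assert (Dphi : forall u t, is_derive (fun z => phi z t) u (f u t)).
{ intros u t. unfold phi. apply (is_derive_RInt (fun x => f x t) (fun z => RInt (fun x => f x t) a z) a u).
  apply filter_forall. intros; apply RIc, Ef. apply cont2_fst; auto. }
assert (Cpsi : forall x, continuous psi x) by (intros; unfold psi; apply param_cont; auto).
assert (Cphi : forall y t, continuous (phi y) t).
{ intros y t. unfold phi. apply (param_cont (fun t x => f x t) a y t). intros; apply cont2_swap; auto. }
assert (DF : forall y, is_derive F y (psi y)).
{ intros y. unfold F.
  replace (psi y) with (RInt (fun t => Derive (fun u => phi u t) y) c d).
  apply (is_derive_RInt_param phi c d y).
  - apply filter_forall. intros x0 t _. eexists. apply Dphi.
  - intros t _. apply (continuity_2d_pt_ext f). intros; symmetry; apply is_derive_unique, Dphi. apply Hf.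
  - apply filter_forall. intros y0. apply exRc. intros; apply Cphi.
  - unfold psi. apply RInt_extR. intros; apply is_derive_unique, Dphi. }
assert (DH : forall y, is_derive H y (psi y)).
{ intros y. unfold H. apply (is_derive_RInt psi (fun z => RInt psi a z) a y).
  apply filter_forall. intros; apply RIc, exRc; intros; apply Cpsi. apply Cpsi. }
assert (DG : forall y, is_derive (fun z => F z - H z) y 0).
{ intros y. replace 0 with (psi y - psi y) by ring. apply (is_derive_minus F H); auto. }
destruct (MVT_gen (fun z => F z - H z) a b (fun _ => 0)) as [z [_ Hz]].
- intros; apply DG.
- intros x _. apply continuity_pt_filterlim. apply (exdc (fun z => F z - H z)). eexists; apply DG.
- assert (F a = 0).
  { unfold F, phi. rewrite (RInt_extR _ (fun _ => 0)). rewrite RInt_constR. fixR; ring.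
    intros; apply RInt_pointR. }
  assert (H a = 0) by (unfold H; apply RInt_pointR).
  change (H b = F b). fixR. lra.
Qed.

Lemma Pf_pos d x : 0 < d -> 0 < Pf d x.
Proof. intros Hd. eapply Rlt_le_trans. apply (heat_pos d x Hd). apply Pf_ge_heat; auto. Qed.

Lemma K_cont2 d x t : 0 < d -> continuity_2d_pt (Gneum d) x t.
Proof.
intros Hd. apply (continuity_2d_pt_ext (fun u v => Pf d (u - v) + Pf d (u + v))).
intros; symmetry; apply Gneum_P; auto.
apply continuity_2d_pt_plus; apply continuity_1d_2d_pt_comp.
apply continuity_pt_filterlim, Pf_cont; auto.
apply continuity_2d_pt_minus; [apply continuity_2d_pt_id1|apply continuity_2d_pt_id2].
apply continuity_pt_filterlim, Pf_cont; auto.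
apply continuity_2d_pt_plus; [apply continuity_2d_pt_id1|apply continuity_2d_pt_id2].
Qed.

Lemma K_pos d r r' : 0 < d -> 0 < Gneum d r r'.
Proof. intros Hd. rewrite Gneum_P by auto. generalize (Pf_pos d (r - r') Hd) (Pf_pos d (r + r') Hd). lra. Qed.

Lemma K_lower d r r' : 0 < d -> Rabs (r - r') <= 1 -> heat d 1 <= Gneum d r r'.
Proof.
intros Hd H. rewrite Gneum_P by auto.
assert (heat d 1 <= heat d (r - r')) by (apply heat_mono; auto; rewrite Rabs_R1; auto).
generalize (Pf_ge_heat d (r - r') Hd) (Pf_pos d (r + r') Hd). lra.
Qed.

Lemma Pf_shift d a b c : 0 < d -> RInt (fun x => Pf d (x + c)) a b = RInt (Pf d) (a + c) (b + c).
Proof.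
intros Hd. replace (a + c) with (1 * a + c) by ring. replace (b + c) with (1 * b + c) by ring.
rewrite <- RInt_comp_linR by (apply Pf_exRInt; auto).
apply RInt_extR. intros. fixR. rewrite Rmult_1_l. f_equal. ring.
Qed.

Lemma Pf_refl d a b c : 0 < d -> RInt (fun x => Pf d (c - x)) a b = RInt (Pf d) (c - b) (c - a).
Proof.
intros Hd.
assert (E1 : ex_RInt (fun y => Pf d (-1 * y + c)) a b).
{ apply exRc; intros. apply (continuous_comp (fun y => -1 * y + c) (Pf d)). apply exdc; auto_derive; auto. apply Pf_cont; auto. }
assert (H1 : RInt (fun y => -1 * Pf d (-1 * y + c)) a b = RInt (Pf d) (-1 * a + c) (-1 * b + c))
  by (apply RInt_comp_linR, Pf_exRInt; auto).
assert (H2 : RInt (fun y => -1 * Pf d (-1 * y + c)) a b = -1 * RInt (fun y => Pf d (-1 * y + c)) a b)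
  by (apply RInt_scalR; auto).
assert (H3 : RInt (Pf d) (c - b) (c - a) = - RInt (Pf d) (c - a) (c - b))
  by (apply RInt_swapR, Pf_exRInt; auto).
assert (H4 : RInt (Pf d) (-1 * a + c) (-1 * b + c) = RInt (Pf d) (c - a) (c - b))
  by (f_equal; lra).
assert (H5 : RInt (fun x => Pf d (c - x)) a b = RInt (fun y => Pf d (-1 * y + c)) a b)
  by (apply RInt_extR; intros; f_equal; ring).
rewrite H5, H3, <- H4, <- H1, H2. lra.
Qed.

Lemma K_int1 d r' : 0 < d -> RInt (fun r => Gneum d r r') 0 1 = 1.
Proof.
intros Hd. rewrite (RInt_extR _ (fun r => Pf d (r + - r') + Pf d (r + r'))).
2:{ intros. rewrite Gneum_P by auto. reflexivity. }
rewrite RInt_plusR.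
2: apply exRc; intros; apply (continuous_comp (fun r => r + - r') (Pf d)); [apply exdc; auto_derive; auto|apply Pf_cont; auto].
2: apply exRc; intros; apply (continuous_comp (fun r => r + r') (Pf d)); [apply exdc; auto_derive; auto|apply Pf_cont; auto].
rewrite !Pf_shift by auto.
rewrite (RInt_extR (Pf d) (fun x => Pf d (0 - x))).
2:{ intros. replace (0 - x) with (- x) by ring. rewrite Pf_even; auto. }
rewrite Pf_refl by auto.
replace (0 - (1 + - r')) with (r' - 1) by ring. replace (0 - (0 + - r')) with r' by ring.
replace (0 + r') with r' by ring. replace (1 + r') with ((r' - 1) + 2) by ring.
rewrite RInt_ChaslesR by (apply Pf_exRInt; auto). apply Pf_period; auto.
Qed.

Lemma K_int2 d r : 0 < d -> RInt (fun r' => Gneum d r r') 0 1 = 1.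
Proof.
intros Hd. rewrite (RInt_extR _ (fun r' => Pf d (r - r') + Pf d (r' + r))).
2:{ intros. rewrite Gneum_P by auto. fixR. f_equal. f_equal. ring. }
rewrite RInt_plusR.
2: apply exRc; intros; apply (continuous_comp (fun r' => r - r') (Pf d)); [apply exdc; auto_derive; auto|apply Pf_cont; auto].
2: apply exRc; intros; apply (continuous_comp (fun r' => r' + r) (Pf d)); [apply exdc; auto_derive; auto|apply Pf_cont; auto].
rewrite Pf_shift, Pf_refl by auto.
replace (r - 1) with (r - 1) by ring. replace (r - 0) with r by ring.
replace (0 + r) with r by ring. replace (1 + r) with ((r - 1) + 2) by ring.
rewrite RInt_ChaslesR by (apply Pf_exRInt; auto). apply Pf_period; auto.
Qed.

Definition cl (Rc x : R) := Rmax 0 (Rmin x Rc).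

Lemma cl_range Rc x : 0 <= Rc -> 0 <= cl Rc x <= Rc.
Proof. intros H. unfold cl, Rmax, Rmin. repeat destruct Rle_dec; lra. Qed.

Lemma cl_id Rc x : 0 <= x <= Rc -> cl Rc x = x.
Proof. intros H. unfold cl, Rmax, Rmin. repeat destruct Rle_dec; lra. Qed.

Lemma cl_lip Rc x y : 0 <= Rc -> Rabs (cl Rc x - cl Rc y) <= Rabs (x - y).
Proof.
intros H. generalize (Rle_abs (x - y)) (Rle_abs (- (x - y))). rewrite Rabs_Ropp. intros.
apply Rabs_le. unfold cl, Rmax, Rmin. repeat destruct Rle_dec; lra.
Qed.

Lemma cl_cont Rc x : 0 <= Rc -> continuous (cl Rc) x.
Proof.
intros H. apply cont_eps. intros eps He. exists eps. split; auto. intros y Hy.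
eapply Rle_lt_trans. apply cl_lip; auto. auto.
Qed.

Definition Psi d m Rc (g : R -> R) (r : R) : R :=
  m * Gneum d r 0 + RInt (fun r' => Gneum d r r' * g r') 0 Rc.

Lemma kg_cont2 d (g : R -> R) x t : 0 < d -> (forall y, continuous g y) ->
  continuity_2d_pt (fun r r' => Gneum d r r' * g r') x t.
Proof.
intros Hd Hg. apply continuity_2d_pt_mult. apply K_cont2; auto.
apply (continuity_2d_pt_ext (fun u v => g v)). auto.
apply continuity_1d_2d_pt_comp. apply continuity_pt_filterlim, Hg. apply continuity_2d_pt_id2.
Qed.

Lemma kg_exRInt d (g : R -> R) r a b : 0 < d -> (forall y, continuous g y) ->
  ex_RInt (fun r' => Gneum d r r' * g r') a b.
Proof. intros Hd Hg. apply exRc. intros. apply (cont2_snd (fun r r' => Gneum d r r' * g r')). apply kg_cont2; auto. Qed.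

Lemma Psi_cont d m Rc g x : 0 < d -> (forall y, continuous g y) -> continuous (Psi d m Rc g) x.
Proof.
intros Hd Hg. unfold Psi.
apply (continuous_plus (fun r => m * Gneum d r 0) (fun r => RInt (fun r' => Gneum d r r' * g r') 0 Rc)).
- apply (continuous_mult (fun _ => m) (fun r => Gneum d r 0)). apply continuous_const.
  apply (cont2_fst (Gneum d)). apply K_cont2; auto.
- apply (param_cont (fun r r' => Gneum d r r' * g r')). intros; apply kg_cont2; auto.
Qed.

Lemma Psi_nonneg d m Rc g r : 0 < d -> 0 <= m -> 0 <= Rc -> (forall y, continuous g y) ->
  (forall t, 0 <= t <= Rc -> 0 <= g t) -> 0 <= Psi d m Rc g r.
Proof.
intros Hd Hm HR Hg Hpos. unfold Psi.
assert (0 <= m * Gneum d r 0) by (generalize (K_pos d r 0 Hd); nra).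
assert (0 <= RInt (fun r' => Gneum d r r' * g r') 0 Rc).
{ apply RInt_ge_0; auto. apply kg_exRInt; auto. intros x Hx.
  generalize (K_pos d r x Hd) (Hpos x ltac:(lra)). nra. }
lra.
Qed.

Definition qc d Rc := 1 - (1 - Rc) * heat d 1.

Lemma K_int_0Rc d Rc r : 0 < d -> 0 < Rc < 1 -> 0 <= r <= 1 ->
  0 <= RInt (fun t => Gneum d r t) 0 Rc <= qc d Rc.
Proof.
intros Hd HR Hr.
assert (E : forall a b, ex_RInt (fun t => Gneum d r t) a b).
{ intros. apply exRc. intros. apply (cont2_snd (Gneum d)). apply K_cont2; auto. }
split.
- apply RInt_ge_0. lra. auto. intros; left; apply K_pos; auto.
- generalize (K_int2 d r Hd). intros H1.
  rewrite <- (RInt_ChaslesR _ 0 Rc 1) in H1 by auto.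
  assert (RInt (fun _ => heat d 1) Rc 1 <= RInt (fun t => Gneum d r t) Rc 1).
  { apply RInt_le. lra. apply exRc; intros; apply continuous_const. auto.
    intros x Hx. apply K_lower; auto. apply Rabs_le; lra. }
  rewrite RInt_constR in H. unfold qc. lra.
Qed.

Lemma qc_bounds d Rc : 0 < d -> 0 < Rc < 1 -> 0 <= qc d Rc < 1.
Proof.
intros Hd HR. split.
- destruct (K_int_0Rc d Rc 0 Hd HR) as [a b]. lra. lra.
- unfold qc. generalize (heat_pos d 1 Hd). nra.
Qed.

Lemma Psi_contract d m Rc g h M r : 0 < d -> 0 < Rc < 1 -> 0 <= r <= 1 ->
  (forall y, continuous g y) -> (forall y, continuous h y) ->
  (forall t, 0 <= t <= Rc -> Rabs (g t - h t) <= M) ->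
  Rabs (Psi d m Rc g r - Psi d m Rc h r) <= qc d Rc * M.
Proof.
intros Hd HR Hr Hg Hh HM.
assert (HM0 : 0 <= M) by (specialize (HM 0 ltac:(lra)); generalize (Rabs_pos (g 0 - h 0)); lra).
unfold Psi.
replace (m * Gneum d r 0 + RInt (fun r' => Gneum d r r' * g r') 0 Rc -
   (m * Gneum d r 0 + RInt (fun r' => Gneum d r r' * h r') 0 Rc)) with
   (RInt (fun r' => Gneum d r r' * g r') 0 Rc - RInt (fun r' => Gneum d r r' * h r') 0 Rc) by ring.
rewrite <- RInt_minusR by (apply kg_exRInt; auto).
assert (Ed : ex_RInt (fun x => Gneum d r x * g x - Gneum d r x * h x) 0 Rc)
  by (apply ex_RInt_minusR; apply kg_exRInt; auto).
assert (EK : ex_RInt (fun t => Gneum d r t) 0 Rc).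
{ apply exRc. intros. apply (cont2_snd (Gneum d)). apply K_cont2; auto. }
assert (Cd : forall x, continuous (fun x => Gneum d r x * g x - Gneum d r x * h x) x).
{ intros x. apply (continuous_minus (fun x => Gneum d r x * g x) (fun x => Gneum d r x * h x)).
  apply (cont2_snd (fun r r' => Gneum d r r' * g r')). apply kg_cont2; auto.
  apply (cont2_snd (fun r r' => Gneum d r r' * h r')). apply kg_cont2; auto. }
eapply Rle_trans. apply abs_RInt_le. lra. auto.
apply Rle_trans with (RInt (fun t => M * Gneum d r t) 0 Rc).
- apply RInt_le. lra.
  apply exRc. intros. apply (continuous_Rabs_comp (fun x => Gneum d r x * g x - Gneum d r x * h x)). auto.
  apply ex_RInt_scalR; auto.
  intros x Hx. replace (Gneum d r x * g x - Gneum d r x * h x) with (Gneum d r x * (g x - h x)) by ring.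
  rewrite Rabs_mult, Rabs_pos_eq by (left; apply K_pos; auto).
  rewrite Rmult_comm. apply Rmult_le_compat_r. left; apply K_pos; auto. apply HM; lra.
- rewrite RInt_scalR by auto. destruct (K_int_0Rc d Rc r Hd HR Hr). rewrite (Rmult_comm (qc d Rc)).
  apply Rmult_le_compat_l; auto.
Qed.

Lemma Series_abs_le (a b : nat -> R) : (forall n, Rabs (a n) <= b n) -> ex_series b -> Rabs (Series a) <= Series b.
Proof.
intros H Eb.
assert (Ea : ex_series a) by (apply (ex_series_le a b); auto).
assert (Hb2 : Series (fun n => 2 * b n) = 2 * Series b) by apply Series_scal_l.
assert (E2 : ex_series (fun n => 2 * b n)) by (apply (ex_series_scal_l 2 b); auto).
assert (S1 : Series (fun n => a n + b n) <= Series (fun n => 2 * b n)).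
{ apply Series_le; auto. intros n. specialize (H n). apply Rabs_le_between' in H || idtac.
  generalize (Rle_abs (a n)) (Rle_abs (- a n)). rewrite Rabs_Ropp. intros. lra. }
assert (S2 : Series (fun n => b n - a n) <= Series (fun n => 2 * b n)).
{ apply Series_le; auto. intros n. specialize (H n).
  generalize (Rle_abs (a n)) (Rle_abs (- a n)). rewrite Rabs_Ropp. intros. lra. }
rewrite Series_plus in S1 by auto. rewrite Series_minus in S2 by auto.
apply Rabs_le. lra.
Qed.

Fixpoint it d m Rc n : R -> R :=
  match n with O => fun _ => 0 | S n => Psi d m Rc (it d m Rc n) end.

Lemma it_cont d m Rc n y : 0 < d -> continuous (it d m Rc n) y.
Proof.
intros Hd. revert y. induction n as [|n IH]; intros y; simpl.
apply continuous_const. apply Psi_cont; auto.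
Qed.

Lemma it_nonneg d m Rc n r : 0 < d -> 0 <= m -> 0 <= Rc -> 0 <= it d m Rc n r.
Proof.
intros Hd Hm HR. revert r. induction n as [|n IH]; intros r; simpl. lra.
apply Psi_nonneg; auto. intros; apply it_cont; auto.
Qed.

Lemma it_diff d m Rc C0 n t : 0 < d -> 0 < Rc < 1 ->
  (forall t, 0 <= t <= Rc -> Rabs (it d m Rc 1 t - it d m Rc 0 t) <= C0) ->
  0 <= t <= Rc -> Rabs (it d m Rc (S n) t - it d m Rc n t) <= C0 * qc d Rc ^ n.
Proof.
intros Hd HR H0. revert t. induction n as [|n IH]; intros t Ht.
- simpl pow. rewrite Rmult_1_r. apply H0; auto.
- change (it d m Rc (S (S n)) t) with (Psi d m Rc (it d m Rc (S n)) t).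
  change (it d m Rc (S n) t) with (Psi d m Rc (it d m Rc n) t).
  replace (C0 * qc d Rc ^ S n) with (qc d Rc * (C0 * qc d Rc ^ n)) by (simpl; ring).
  apply Psi_contract; auto. lra. intros; apply it_cont; auto. intros; apply it_cont; auto.
Qed.

Lemma it_tele d m Rc y N : sum_f_R0 (fun k => it d m Rc (S k) y - it d m Rc k y) N = it d m Rc (S N) y.
Proof.
induction N as [|N IH]. simpl. ring. rewrite tech5, IH. ring.
Qed.

Definition gs d m Rc x := Series (fun k => it d m Rc (S k) (cl Rc x) - it d m Rc k (cl Rc x)).

Lemma C0_exists d m Rc : 0 < d -> 0 <= m -> 0 < Rc < 1 -> exists C0, 0 <= C0 /\
  forall t, 0 <= t <= Rc -> Rabs (it d m Rc 1 t - it d m Rc 0 t) <= C0.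
Proof.
intros Hd Hm HR.
destruct (continuity_ab_maj (it d m Rc 1) 0 Rc) as [Mx [HM HMx]]. lra.
intros; apply continuity_pt_filterlim, it_cont; auto.
exists (it d m Rc 1 Mx). split. apply it_nonneg; auto; lra.
intros t Ht. simpl (it d m Rc 0 t). rewrite Rminus_0_r, Rabs_pos_eq by (apply it_nonneg; auto; lra).
apply HM; auto.
Qed.

Lemma gs_tail d m Rc C0 N x : 0 < d -> 0 < Rc < 1 ->
  (forall t, 0 <= t <= Rc -> Rabs (it d m Rc 1 t - it d m Rc 0 t) <= C0) ->
  Rabs (gs d m Rc x - it d m Rc (S N) (cl Rc x)) <= C0 * qc d Rc ^ (S N) / (1 - qc d Rc).
Proof.
intros Hd HR HC.
destruct (qc_bounds d Rc Hd HR) as [q0 q1].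
assert (Hq : Rabs (qc d Rc) < 1) by (rewrite Rabs_pos_eq; lra).
set (y := cl Rc x). assert (Hy : 0 <= y <= Rc) by (apply cl_range; lra).
pose (a := fun k => it d m Rc (S k) y - it d m Rc k y).
assert (Ha : forall k, Rabs (a k) <= C0 * qc d Rc ^ k) by (intros k; exact (it_diff d m Rc C0 k y Hd HR HC Hy)).
assert (Ea : ex_series a).
{ apply (ex_series_le a (fun k => C0 * qc d Rc ^ k)). intros k. change (norm (a k)) with (Rabs (a k)). apply Ha. apply ex_series_geomC; auto. }
unfold gs. fold y. change (Series (fun k => it d m Rc (S k) y - it d m Rc k y)) with (Series a).
rewrite (Series_incr_n a (S N)); [| lia | auto]. change (pred (S N)) with N.
unfold a at 1. rewrite it_tele.
replace (it d m Rc (S N) y + Series (fun k => a (S N + k)%nat) - it d m Rc (S N) y) with (Series (fun k => a (S N + k)%nat)) by ring.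
rewrite <- Series_geomC by auto.
apply Series_abs_le. intros k. rewrite Rmult_assoc, <- pow_add. exact (Ha (S N + k)%nat).
apply ex_series_geomC; auto.
Qed.

Lemma geom_tail_small C q eps : 0 <= C -> 0 <= q < 1 -> 0 < eps -> exists N, C * q ^ (S N) / (1 - q) < eps.
Proof.
intros HC Hq He.
destruct (small_pow q (eps * (1 - q) / (C + 1))) as [N HN]. auto.
apply Rdiv_lt_0_compat; [apply Rmult_lt_0_compat|]; lra.
exists N. assert (q ^ S N <= q ^ N) by (apply pow_decr; [lra|lia]).
assert (0 <= q ^ S N) by (apply pow_le; lra).
apply (Rmult_lt_reg_r (1 - q)). lra. unfold Rdiv. rewrite Rmult_assoc, Rinv_l by lra. rewrite Rmult_1_r.
apply Rle_lt_trans with ((C + 1) * q ^ N). nra.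
apply (Rmult_lt_compat_l (C + 1)) in HN. 2: lra.
replace ((C + 1) * (eps * (1 - q) / (C + 1))) with (eps * (1 - q)) in HN by (field; lra). lra.
Qed.

Lemma gs_props d m Rc : 0 < d -> 0 <= m -> 0 < Rc < 1 ->
  (forall x, continuous (gs d m Rc) x) /\
  (forall x, 0 <= gs d m Rc x) /\
  (forall r, 0 <= r <= Rc -> gs d m Rc r = Psi d m Rc (gs d m Rc) r).
Proof.
intros Hd Hm HR.
destruct (C0_exists d m Rc Hd Hm HR) as [C0 [HC0 HC]].
destruct (qc_bounds d Rc Hd HR) as [q0 q1].
set (q := qc d Rc) in *.
assert (Tl : forall N x, Rabs (gs d m Rc x - it d m Rc (S N) (cl Rc x)) <= C0 * q ^ (S N) / (1 - q))
  by (intros N x; exact (gs_tail d m Rc C0 N x Hd HR HC)).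
assert (Cont : forall x, continuous (gs d m Rc) x).
{ intros x0. apply cont_eps. intros eps He.
  destruct (geom_tail_small C0 q (eps / 3)) as [N HN]; auto. lra.
  assert (Ch : continuous (fun x => it d m Rc (S N) (cl Rc x)) x0).
  { apply (continuous_comp (cl Rc) (it d m Rc (S N))). apply cl_cont; lra. apply it_cont; auto. }
  destruct (eps_cont _ x0 Ch (eps / 3)) as [dl [Hdl H1]]. lra.
  exists dl. split; auto. intros y Hy. specialize (H1 y Hy).
  generalize (Tl N y) (Tl N x0). intros A1 A2.
  apply Rabs_def2 in H1. apply Rabs_le_between' in A1 || idtac.
  assert (B1 := Rabs_le_between _ _ (conj (Rle_refl _) A1)) || idtac.
  apply Rabs_def1.
  - generalize (Rle_abs (gs d m Rc y - it d m Rc (S N) (cl Rc y))) (Rle_abs (- (gs d m Rc x0 - it d m Rc (S N) (cl Rc x0)))).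
    rewrite Rabs_Ropp. lra.
  - generalize (Rle_abs (- (gs d m Rc y - it d m Rc (S N) (cl Rc y)))) (Rle_abs (gs d m Rc x0 - it d m Rc (S N) (cl Rc x0))).
    rewrite Rabs_Ropp. lra. }
split; [exact Cont|split].
- intros x. destruct (Rle_lt_dec 0 (gs d m Rc x)) as [h|h]; auto. exfalso.
  destruct (geom_tail_small C0 q (- gs d m Rc x)) as [N HN]; auto. lra.
  generalize (Tl N x) (it_nonneg d m Rc (S N) (cl Rc x) Hd Hm ltac:(lra)). intros A1 A2.
  generalize (Rle_abs (- (gs d m Rc x - it d m Rc (S N) (cl Rc x)))). rewrite Rabs_Ropp. lra.
- intros r Hr. apply approx_eq. intros eps He.
  destruct (geom_tail_small C0 q (eps / 2)) as [N HN]; auto. lra.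
  assert (A1 := Tl (S N) r). rewrite (cl_id Rc r Hr) in A1.
  assert (T2 : C0 * q ^ S (S N) / (1 - q) <= C0 * q ^ (S N) / (1 - q)).
  { unfold Rdiv. apply Rmult_le_compat_r. left; apply Rinv_0_lt_compat; lra. apply Rmult_le_compat_l; auto.
    apply pow_decr; [lra|lia]. }
  assert (A2 : Rabs (Psi d m Rc (it d m Rc (S N)) r - Psi d m Rc (gs d m Rc) r) <= q * (C0 * q ^ (S N) / (1 - q))).
  { apply Psi_contract; auto. lra. intros; apply it_cont; auto.
    intros t Ht. rewrite Rabs_minus_sym. rewrite <- (cl_id Rc t Ht) at 2. apply Tl. }
  change (it d m Rc (S (S N)) r) with (Psi d m Rc (it d m Rc (S N)) r) in A1.
  assert (0 <= C0 * q ^ (S N) / (1 - q)).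
  { apply Rmult_le_pos. apply Rmult_le_pos; auto. apply pow_le; lra. left; apply Rinv_0_lt_compat; lra. }
  assert (q * (C0 * q ^ (S N) / (1 - q)) <= C0 * q ^ (S N) / (1 - q)) by nra.
  generalize (Rle_abs (gs d m Rc r - Psi d m Rc (it d m Rc (S N)) r)) (Rle_abs (- (gs d m Rc r - Psi d m Rc (it d m Rc (S N)) r))).
  generalize (Rle_abs (Psi d m Rc (it d m Rc (S N)) r - Psi d m Rc (gs d m Rc) r)) (Rle_abs (- (Psi d m Rc (it d m Rc (S N)) r - Psi d m Rc (gs d m Rc) r))).
  rewrite !Rabs_Ropp. intros. apply Rabs_def1; lra.
Qed.

Lemma compare d m Rc1 Rc2 g1 g2 : 0 < d -> 0 < Rc1 -> Rc1 <= Rc2 -> Rc2 < 1 ->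
  (forall y, continuous g1 y) -> (forall y, continuous g2 y) ->
  (forall r, 0 <= r <= Rc1 -> g1 r = Psi d m Rc1 g1 r) ->
  (forall r, 0 <= r <= Rc2 -> g2 r = Psi d m Rc2 g2 r) ->
  (forall t, 0 <= t <= Rc2 -> 0 <= g2 t) ->
  forall r, 0 <= r <= Rc1 -> g1 r <= g2 r.
Proof.
intros Hd H1 H12 H2 Cg1 Cg2 F1 F2 P2.
assert (HR1 : 0 < Rc1 < 1) by lra.
destruct (continuity_ab_maj (fun r => g1 r - g2 r) 0 Rc1) as [r0 [HM Hr0]]. lra.
{ intros; apply continuity_pt_filterlim. apply (continuous_minus g1 g2); auto. }
set (M := g1 r0 - g2 r0).
assert (HMle : M <= 0).
{ destruct (Rle_lt_dec M 0) as [h|h]; auto. exfalso.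
  assert (E : M = RInt (fun t => Gneum d r0 t * g1 t - Gneum d r0 t * g2 t) 0 Rc1
               - RInt (fun t => Gneum d r0 t * g2 t) Rc1 Rc2).
  { unfold M. rewrite F1, F2 by lra. unfold Psi.
    rewrite <- (RInt_ChaslesR (fun t => Gneum d r0 t * g2 t) 0 Rc1 Rc2) by (apply kg_exRInt; auto).
    rewrite RInt_minusR by (apply kg_exRInt; auto). ring. }
  assert (P : 0 <= RInt (fun t => Gneum d r0 t * g2 t) Rc1 Rc2).
  { apply RInt_ge_0; auto. apply kg_exRInt; auto. intros x Hx.
    generalize (K_pos d r0 x Hd) (P2 x ltac:(lra)). nra. }
  assert (EK : ex_RInt (fun t => Gneum d r0 t) 0 Rc1).
  { apply exRc. intros. apply (cont2_snd (Gneum d)). apply K_cont2; auto. }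
  assert (Q : RInt (fun t => Gneum d r0 t * g1 t - Gneum d r0 t * g2 t) 0 Rc1 <= RInt (fun t => M * Gneum d r0 t) 0 Rc1).
  { apply RInt_le. lra. apply ex_RInt_minusR; apply kg_exRInt; auto. apply ex_RInt_scalR; auto.
    intros x Hx. replace (Gneum d r0 x * g1 x - Gneum d r0 x * g2 x) with (Gneum d r0 x * (g1 x - g2 x)) by ring.
    rewrite Rmult_comm. apply Rmult_le_compat_r. left; apply K_pos; auto. apply HM; lra. }
  rewrite RInt_scalR in Q by auto.
  destruct (K_int_0Rc d Rc1 r0 Hd HR1 ltac:(lra)) as [_ K1].
  destruct (qc_bounds d Rc1 Hd HR1) as [_ q1].
  assert (M * RInt (fun t => Gneum d r0 t) 0 Rc1 <= M * qc d Rc1) by (apply Rmult_le_compat_l; lra).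
  assert (M * qc d Rc1 < M) by nra.
  set (A := RInt (fun t => Gneum d r0 t * g1 t - Gneum d r0 t * g2 t) 0 Rc1) in *.
  set (B := RInt (fun t => Gneum d r0 t * g2 t) Rc1 Rc2) in *.
  set (I := RInt (fun t => Gneum d r0 t) 0 Rc1) in *.
  assert (M <= A) by (rewrite E; lra). lra. }
intros r Hr. generalize (HM r Hr). unfold M in HMle. lra.
Qed.

Lemma conv_Psi d m Rc (rho g : R -> R) r : 0 < d -> 0 < Rc < 1 -> (forall y, continuous g y) ->
  (forall t, 0 <= t <= Rc -> rho t = g t) -> (forall t, Rc < t <= 1 -> rho t = 0) ->
  Gneum_conv d (m, rho) r = Psi d m Rc g r.
Proof.
intros Hd HR Hg H1 H2. unfold Gneum_conv, Psi. simpl fst; simpl snd. f_equal.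
assert (E1 : ex_RInt (fun r' => Gneum d r r' * rho r') 0 Rc).
{ apply (ex_RInt_ext (fun r' => Gneum d r r' * g r')). intros x Hx.
  rewrite Rmin_left, Rmax_right in Hx by lra. rewrite H1; auto; lra. apply kg_exRInt; auto. }
assert (E2 : ex_RInt (fun r' => Gneum d r r' * rho r') Rc 1).
{ apply (ex_RInt_ext (fun _ => 0)). intros x Hx.
  rewrite Rmin_left, Rmax_right in Hx by lra. rewrite H2 by lra. fixR; ring. apply exRc; intros; apply continuous_const. }
rewrite <- (RInt_ChaslesR _ 0 Rc 1) by auto.
rewrite (RInt_extR (fun r' => Gneum d r r' * rho r') (fun _ => 0) Rc 1).
2:{ intros x Hx. rewrite Rmin_left, Rmax_right in Hx by lra. rewrite H2 by lra. fixR; ring. }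
rewrite RInt_constR.
rewrite (RInt_extR (fun r' => Gneum d r r' * rho r') (fun r' => Gneum d r r' * g r') 0 Rc).
2:{ intros x Hx. rewrite Rmin_left, Rmax_right in Hx by lra. rewrite H1; auto; lra. }
fixR. ring.
Qed.

Lemma within_to_cont Rc (rho : R -> R) x : 0 <= Rc ->
  (forall r, 0 <= r <= Rc ->
     filterlim rho (within (fun y => 0 <= y <= Rc) (locally r)) (locally (rho r))) ->
  continuous (fun y => rho (cl Rc y)) x.
Proof.
intros HR H. unfold continuous.
apply (filterlim_comp _ _ _ (cl Rc) rho (locally x) (within (fun y => 0 <= y <= Rc) (locally (cl Rc x)))).
- intros P HP. unfold filtermap. unfold within in HP.
  assert (C := cl_cont Rc x HR). unfold continuous in C.
  specialize (C _ HP). unfold filtermap in C. revert C. apply filter_imp.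
  intros z Hz. apply Hz. apply cl_range; auto.
- apply H. apply cl_range; auto.
Qed.

Lemma cont_to_within Rc (g : R -> R) r : 0 <= r <= Rc -> continuous g r ->
  filterlim (fun x => if Rle_dec x Rc then g x else 0) (within (fun y => 0 <= y <= Rc) (locally r))
    (locally (if Rle_dec r Rc then g r else 0)).
Proof.
intros Hr Hg. destruct (Rle_dec r Rc) as [_|n]; [|lra].
intros P HP. specialize (Hg P HP). unfold filtermap in *. unfold within.
revert Hg. apply filter_imp. intros x Hx Dx. destruct (Rle_dec x Rc); [auto|lra].
Qed.

Lemma profile_unpack j d Rc rho : 0 < d -> 0 < Rc < 1 -> fixed_profile j d Rc rho ->
  (forall y, continuous (fun y => rho (cl Rc y)) y) /\
  (forall r, 0 <= r <= Rc -> rho (cl Rc r) = Psi d (j * d) Rc (fun y => rho (cl Rc y)) r) /\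
  (forall t, 0 <= t <= Rc -> 0 <= rho (cl Rc t)) /\
  (forall t, 0 <= t <= Rc -> rho t = rho (cl Rc t)) /\
  (forall t, Rc < t <= 1 -> rho t = 0).
Proof.
intros Hd HR [Hnn [Hc [Hz [Hcut [Hfst Hsnd]]]]].
assert (Cg : forall y, continuous (fun y => rho (cl Rc y)) y) by (intros; apply within_to_cont; auto; lra).
assert (Eq : forall t, 0 <= t <= Rc -> rho t = rho (cl Rc t)) by (intros; rewrite cl_id; auto).
split; [auto|split; [|split; [|split; auto]]].
- intros r Hr. rewrite cl_id by auto.
  specialize (Hsnd r ltac:(lra)). unfold cut_paste in Hsnd. simpl in Hsnd.
  destruct (Rle_dec r Rc) as [_|n]; [|lra].
  rewrite <- Hsnd. apply conv_Psi; auto.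
- intros t Ht. rewrite cl_id by auto. apply Hnn. lra.
Qed.

Lemma profile_compare j d R1 R2 rho1 rho2 : 0 < d -> 0 < R1 -> R1 <= R2 -> R2 < 1 ->
  fixed_profile j d R1 rho1 -> fixed_profile j d R2 rho2 ->
  forall r, 0 <= r <= 1 -> rho1 r <= rho2 r.
Proof.
intros Hd H1 H12 H2 P1 P2.
destruct (profile_unpack j d R1 rho1 Hd ltac:(lra) P1) as [C1 [F1 [N1 [E1 Z1]]]].
destruct (profile_unpack j d R2 rho2 Hd ltac:(lra) P2) as [C2 [F2 [N2 [E2 Z2]]]].
assert (Hnn2 := proj1 P2).
intros r Hr. destruct (Rle_dec r R1) as [h|h].
- rewrite E1, E2 by lra.
  apply (compare d (j * d) R1 R2 (fun y => rho1 (cl R1 y)) (fun y => rho2 (cl R2 y))); auto. lra.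
- rewrite Z1 by lra. apply Hnn2; auto.
Qed.

Lemma existence j d Rc : 0 < j -> 0 < d -> 0 < Rc < 1 ->
  fixed_profile j d Rc (fun r => if Rle_dec r Rc then gs d (j * d) Rc r else 0).
Proof.
intros Hj Hd HR.
set (m := j * d). assert (Hm : 0 < m) by (unfold m; nra).
set (g := gs d m Rc).
destruct (gs_props d m Rc Hd ltac:(lra) HR) as [Cg [Ng Fg]]. fold g in Cg, Ng, Fg.
set (rho := fun r => if Rle_dec r Rc then g r else 0).
assert (R1 : forall t, 0 <= t <= Rc -> rho t = g t) by (intros t Ht; unfold rho; destruct Rle_dec; [auto|lra]).
assert (R2 : forall t, Rc < t <= 1 -> rho t = 0) by (intros t Ht; unfold rho; destruct Rle_dec; [lra|auto]).
assert (V : forall r, Gneum_conv d (m, rho) r = Psi d m Rc g r) by (intros; apply conv_Psi; auto).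
set (v := Gneum_conv d (m, rho)).
assert (Cv : forall x, continuous v x).
{ intros x. apply (continuous_ext (Psi d m Rc g)). intros; unfold v; rewrite V; auto. apply Psi_cont; auto. }
assert (Ev : forall a b, ex_RInt v a b) by (intros; apply exRc; intros; auto).
assert (Eg : forall a b, ex_RInt g a b) by (intros; apply exRc; intros; auto).
assert (Tot : RInt v 0 1 = m + RInt g 0 Rc).
{ rewrite (RInt_extR v (fun r => m * Gneum d r 0 + RInt (fun r' => Gneum d r r' * g r') 0 Rc)).
  2:{ intros; unfold v; rewrite V; reflexivity. }
  rewrite RInt_plusR.
  2:{ apply ex_RInt_scalR. apply exRc. intros. apply (cont2_fst (Gneum d)). apply K_cont2; auto. }
  2:{ apply exRc. intros. apply (param_cont (fun r r' => Gneum d r r' * g r')). intros; apply kg_cont2; auto. }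
  rewrite RInt_scalR by (apply exRc; intros; apply (cont2_fst (Gneum d)); apply K_cont2; auto).
  rewrite K_int1 by auto.
  rewrite (fubini (fun r r' => Gneum d r r' * g r') 0 1 0 Rc) by (intros; apply kg_cont2; auto).
  rewrite (RInt_extR (fun t => RInt (fun x => Gneum d x t * g t) 0 1) g).
  fixR; ring.
  intros t _. rewrite (RInt_extR _ (fun x => g t * Gneum d x t)) by (intros; fixR; ring).
  rewrite RInt_scalR. rewrite K_int1 by auto. fixR; ring.
  apply exRc. intros. apply (cont2_fst (Gneum d)). apply K_cont2; auto. }
assert (Part : RInt v 0 Rc = RInt g 0 Rc).
{ apply RInt_extR. intros x Hx. rewrite Rmin_left, Rmax_right in Hx by lra. unfold v. rewrite V. symmetry. apply Fg. lra. }
assert (Pos : 0 < RInt g 0 Rc).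
{ apply RInt_gt_0. lra. 2: intros; auto.
  intros x Hx. rewrite Fg by lra. unfold Psi.
  assert (0 < m * Gneum d x 0) by (generalize (K_pos d x 0 Hd); nra).
  assert (0 <= RInt (fun r' => Gneum d x r' * g r') 0 Rc).
  { apply RInt_ge_0. lra. apply kg_exRInt; auto. intros y Hy. generalize (K_pos d x y Hd) (Ng y). nra. }
  lra. }
split; [|split; [|split; [|split]]].
- intros r Hr. unfold rho. destruct Rle_dec; [apply Ng|lra].
- intros r Hr. apply (cont_to_within Rc g r Hr). auto.
- intros r Hr. apply R2; auto.
- unfold is_cut_point. fold m. fold rho. fold v. split. lra. split.
  + rewrite Tot. lra.
  + rewrite <- (RInt_ChaslesR v 0 Rc 1) in Tot by auto. rewrite Part in Tot. lra.
- unfold meas_eq, cut_paste. simpl. split. reflexivity. fold m. fold rho. fold v.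
  intros r Hr. destruct (Rle_dec r Rc) as [h|h].
  + rewrite R1 by lra. unfold v. rewrite V. symmetry. apply Fg. lra.
  + rewrite R2 by lra. reflexivity.
Qed.

Theorem theorem3p1 (j : R) (hj : 0 < j) :
  exists delta0 : R -> R,
    (forall Rc, 0 < Rc < 1 -> 0 < delta0 Rc) /\
    (forall Rc, 0 < Rc < 1 -> forall delta, 0 < delta < delta0 Rc ->
       exists rho, fixed_profile j delta Rc rho /\
         forall rho', fixed_profile j delta Rc rho' ->
           forall r, 0 <= r <= 1 -> rho' r = rho r) /\
    (forall R1 R2, 0 < R1 -> R1 <= R2 -> R2 < 1 ->
       forall delta, 0 < delta -> delta < delta0 R1 -> delta < delta0 R2 ->
       forall rho1 rho2, fixed_profile j delta R1 rho1 -> fixed_profile j delta R2 rho2 ->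
         forall r, 0 <= r <= 1 -> rho1 r <= rho2 r).
Proof.
exists (fun _ => 1). split; [|split].
- intros; lra.
- intros Rc HR delta Hd.
  exists (fun r => if Rle_dec r Rc then gs delta (j * delta) Rc r else 0).
  assert (P := existence j delta Rc hj ltac:(lra) HR).
  split; auto.
  intros rho' P' r Hr.
  assert (A := profile_compare j delta Rc Rc _ _ ltac:(lra) ltac:(lra) ltac:(lra) ltac:(lra) P' P r Hr).
  assert (B := profile_compare j delta Rc Rc _ _ ltac:(lra) ltac:(lra) ltac:(lra) ltac:(lra) P P' r Hr).
  lra.
- intros R1 R2 H1 H12 H2 delta Hd _ _ rho1 rho2 P1 P2 r Hr.
  exact (profile_compare j delta R1 R2 rho1 rho2 Hd H1 H12 H2 P1 P2 r Hr).
Qed.
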